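(* Let $\ell$ be a positive integer and $n$ an integer such that $a:=n/\ell\in\mathbb Z$ and $n\ell+\ell^2>0$. For $u,v\in\mathbb C$, $\tau\in\mathbb H$, $n'\in\mathbb R$ and $\ell'\in\mathbb Z$ define $$\chi_{\mathsf A^{n,\ell}_{n',\ell'}}(u,v;\tau)=-i\,\frac{\theta_1(u;\tau)}{\eta(\tau)^3}\sum_{m\in\mathbb Z}\frac{(-1)^{k}e^{2\pi i v k}\,e^{2\pi i u(ak+n'+\frac12)}\,e^{\pi i\tau k(k(2a+1)+2n'+1)}}{1-e^{2\pi i(u+k\tau)}},\qquad k=m\ell+\ell',$$ for $u$ such that no denominator vanishes. Then, writing $y=e^{2\pi i v}$, $z=e^{2\pi i u}$, $$\chi_{\mathsf A^{n,\ell}_{n',\ell'}}(u+1,v;\tau)=e^{2\pi i(a\ell'+n')}\chi_{\mathsf A^{n,\ell}_{n',\ell'}}(u,v;\tau),\qquad \chi_{\mathsf A^{n,\ell}_{n',\ell'}}(u+\tau,v;\tau)=y^{-1}\chi_{\mathsf A^{n,\ell}_{n'-a-1,\ell'+1}}(u,v;\tau),$$ $$\chi_{\mathsf A^{n,\ell}_{n',\ell'}}(u,v+1;\tau)=\chi_{\mathsf A^{n,\ell}_{n',\ell'}}(u,v;\tau),\qquad \chi_{\mathsf A^{n,\ell}_{n',\ell'}}(u,v+\tau;\tau)=z^{-1}\chi_{\mathsf A^{n,\ell}_{n'+1,\ell'}}(u,v;\tau),$$ and more generally, for every $\alpha\in\mathbb R$, $$\chi_{\mathsf A^{n,\ell}_{n',\ell'}}(u,v+\alpha\tau;\tau)=e^{-2\pi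 i\alpha u}\,\chi_{\mathsf A^{n,\ell}_{n'+\alpha,\ell'}}(u,v;\tau).$$
   Context: $\theta_1(u;\tau)=-i\sum_{n\in\mathbb Z}(-1)^n e^{\pi i(n+\frac12)^2\tau+2\pi i u(n+\frac12)}$ and $\eta(\tau)=e^{\pi i\tau/12}\prod_{j\ge1}(1-e^{2\pi i j\tau})$. The function $\chi_{\mathsf A^{n,\ell}_{n',\ell'}}$ is the character of the atypical module $\mathsf A^{n,\ell}_{n',\ell'}$ of a W-superalgebra extending $\widehat{\mathfrak{gl}}(1|1)$; here it is taken as defined by the displayed formula. *)

(* Defs.v *)
From Stdlib Require Import Reals ZArith.
From Coquelicot Require Import Coquelicot.
Open Scope R_scope.

Definition cexp (z : C) : C :=
  (exp (Re z) * cos (Im z), exp (Re z) * sin (Im z)).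

Definition e2pi (z : C) : C := cexp (2 * PI * Ci * z)%C.

Definition clim (s : nat -> C) : C :=
  (real (Lim_seq (fun N => Re (s N))), real (Lim_seq (fun N => Im (s N)))).

(* bilateral sum over Z: limit of the symmetric partial sums
   sum_{m=-N}^{N} f m  (all series below converge absolutely) *)
Definition zsum (f : Z -> C) : C :=
  clim (fun N => sum_n (fun k => f (Z.of_nat k - Z.of_nat N)%Z) (2 * N)).

Fixpoint cprod_part (f : nat -> C) (N : nat) : C :=
  match N with
  | O => 1%C
  | S N' => (cprod_part f N' * f N)%C
  end.
Definition cprod1 (f : nat -> C) : C := clim (cprod_part f).

Definition sgnZ (k : Z) : C := RtoC (powerRZ (-1) k).

Definition theta1 (u tau : C) : C :=
  (- Ci * zsum (fun n =>
      sgnZ n * cexp (PI * Ci * RtoC ((IZR n + /2) ^ 2) * tau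
                     + 2 * PI * Ci * u * RtoC (IZR n + /2))))%C.

Definition eta (tau : C) : C :=
  (cexp (PI * Ci * tau / 12) *
   cprod1 (fun j => 1 - e2pi (RtoC (INR j) * tau)))%C.

Definition aZ (n l : Z) : R := IZR (n / l)%Z.

Definition kZ (l l' m : Z) : Z := (m * l + l')%Z.

Definition chiA (n l : Z) (n' : R) (l' : Z) (u v tau : C) : C :=
  let a := aZ n l in
  (- Ci * theta1 u tau / (eta tau ^ 3) *
   zsum (fun m =>
     let k := kZ l l' m in
     let kR := IZR k in
     sgnZ k * e2pi (v * RtoC kR) * e2pi (u * RtoC (a * kR + n' + /2))
       * cexp (PI * Ci * tau * RtoC (kR * (kR * (2 * a + 1) + 2 * n' + 1)))
       / (1 - e2pi (u + RtoC kR * tau))))%C.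

Definition admissible (l l' : Z) (u tau : C) : Prop :=
  forall m : Z, (1 - e2pi (u + RtoC (IZR (kZ l l' m)) * tau))%C <> 0%C.

(* Main.v *)
Require Import Defs.
From Stdlib Require Import Reals ZArith Lra Lia Psatz FunctionalExtensionality.
From Coquelicot Require Import Coquelicot.
Open Scope R_scope.

Lemma Ceq (a b : C) : Re a = Re b -> Im a = Im b -> a = b.
Proof. destruct a, b; simpl; intros; subst; reflexivity. Qed.

Ltac Cring := apply Ceq; unfold Re, Im; simpl; ring.

Lemma cexp_add (a b : C) : cexp (a + b)%C = (cexp a * cexp b)%C.
Proof.
  unfold cexp, Re, Im; apply Ceq; simpl; rewrite exp_plus, ?cos_plus, ?sin_plus; ring.
Qed.

Lemma cexp_0 : cexp 0%C = 1%C.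
Proof. unfold cexp, Re, Im; apply Ceq; simpl; rewrite exp_0, ?cos_0, ?sin_0; ring. Qed.

Lemma cexp_opp_mul (a : C) : (cexp (- a) * cexp a)%C = 1%C.
Proof. rewrite <- cexp_add, <- cexp_0. f_equal. ring. Qed.

Lemma cexp_2pi : cexp (2 * PI * Ci)%C = 1%C.
Proof.
  unfold cexp; apply Ceq; simpl.
  - replace (2 * 0 - 0 * 0) with 0 by ring.
    replace ((2 * PI - 0 * 0) * 0 - (2 * 0 + 0 * PI) * 1) with 0 by ring.
    replace ((2 * PI - 0 * 0) * 1 + (2 * 0 + 0 * PI) * 0) with (2*PI) by ring.
    rewrite exp_0, cos_2PI; ring.
  - replace ((2 * PI - 0 * 0) * 0 - (2 * 0 + 0 * PI) * 1) with 0 by ring.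
    replace ((2 * PI - 0 * 0) * 1 + (2 * 0 + 0 * PI) * 0) with (2*PI) by ring.
    rewrite exp_0, sin_2PI; ring.
Qed.

Lemma cexp_pi : cexp (PI * Ci)%C = (-1)%C.
Proof.
  unfold cexp; apply Ceq; simpl.
  - replace (PI * 0 - 0 * 1) with 0 by ring.
    replace (PI * 1 + 0 * 0) with PI by ring.
    rewrite exp_0, cos_PI; ring.
  - replace (PI * 0 - 0 * 1) with 0 by ring.
    replace (PI * 1 + 0 * 0) with PI by ring.
    rewrite exp_0, sin_PI; ring.
Qed.

Lemma cexp_nat (n : nat) (w : C) : cexp (RtoC (INR n) * w)%C = Cpow (cexp w) n.
Proof.
  induction n.
  - simpl. rewrite <- cexp_0. f_equal. Cring.
  - rewrite S_INR. replace (RtoC (INR n + 1) * w)%C with (RtoC (INR n) * w + w)%C by Cring.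
    rewrite cexp_add, IHn. simpl. ring.
Qed.

Lemma Cpow_1 n : Cpow 1%C n = 1%C.
Proof. induction n; simpl; [reflexivity| rewrite IHn; ring]. Qed.

Lemma cexp_2piZ (k : Z) : cexp (2 * PI * Ci * RtoC (IZR k))%C = 1%C.
Proof.
  destruct (Z_le_gt_dec 0 k) as [H|H].
  - rewrite <- (Z2Nat.id k H), <- INR_IZR_INZ.
    replace (2 * PI * Ci * RtoC (INR (Z.to_nat k)))%C with (RtoC (INR (Z.to_nat k)) * (2*PI*Ci))%C by ring.
    rewrite cexp_nat, cexp_2pi. apply Cpow_1.
  - assert (H' : (0 <= - k)%Z) by lia.
    assert (Hm : IZR (-k) = INR (Z.to_nat (-k))) by (rewrite INR_IZR_INZ, Z2Nat.id; auto).
    pose proof (cexp_opp_mul (RtoC (INR (Z.to_nat (-k))) * (2 * PI * Ci))%C) as E.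
    rewrite (cexp_nat _ (2*PI*Ci)%C), cexp_2pi, Cpow_1, Cmult_1_r in E.
    rewrite <- E. f_equal. rewrite <- Hm, opp_IZR. Cring.
Qed.

Lemma Cmod_cexp (z : C) : Cmod (cexp z) = exp (Re z).
Proof.
  unfold cexp, Cmod, Re, Im; simpl.
  replace (exp (fst z) * cos (snd z) * (exp (fst z) * cos (snd z) * 1) +
     exp (fst z) * sin (snd z) * (exp (fst z) * sin (snd z) * 1))
    with (exp (fst z) ^ 2 * ((sin (snd z))² + (cos (snd z))²)) by (unfold Rsqr; ring).
  rewrite sin2_cos2, Rmult_1_r. apply sqrt_pow2. left; apply exp_pos.
Qed.

Lemma cexp_neq0 z : cexp z <> 0%C.
Proof. intro H. apply (f_equal Cmod) in H. rewrite Cmod_cexp, Cmod_0 in H. pose proof (exp_pos (Re z)); lra. Qed.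

Lemma cexp_inv z : (/ cexp z)%C = cexp (- z)%C.
Proof.
  pose proof (cexp_opp_mul z) as E.
  rewrite <- (Cmult_1_l (/ cexp z)%C), <- E, <- Cmult_assoc, Cinv_r, Cmult_1_r; [reflexivity| apply cexp_neq0].
Qed.

Lemma sgnZ_succ k : sgnZ (k + 1) = (- sgnZ k)%C.
Proof.
  unfold sgnZ. rewrite powerRZ_add by lra. simpl. apply Ceq; simpl; ring.
Qed.

Lemma Cmod_sgnZ k : Cmod (sgnZ k) = 1.
Proof.
  unfold sgnZ. rewrite Cmod_R. destruct k; simpl.
  - apply Rabs_R1.
  - apply pow_1_abs.
  - rewrite Rabs_inv, pow_1_abs, Rinv_1; reflexivity.
Qed.

Definition symS (f : Z -> C) (N : nat) : C :=
  sum_n (fun k => f (Z.of_nat k - Z.of_nat N)%Z) (2 * N).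

Definition Zconv (f : Z -> C) (L : C) :=
  filterlim (symS f) eventually (locally L).


Lemma clim_of (s : nat -> C) L : filterlim s eventually (locally L) -> clim s = L.
Proof.
  intro H. unfold clim.
  assert (H1 : is_lim_seq (fun N => Re (s N)) (Re L)).
  { apply filterlim_locally. intro eps.
    generalize (proj1 (filterlim_locally s L) H eps). apply filter_imp.
    intros x [Hb1 Hb2]. exact Hb1. }
  assert (H2 : is_lim_seq (fun N => Im (s N)) (Im L)).
  { apply filterlim_locally. intro eps.
    generalize (proj1 (filterlim_locally s L) H eps). apply filter_imp.
    intros x [Hb1 Hb2]. exact Hb2. }
  rewrite (is_lim_seq_unique _ _ H1), (is_lim_seq_unique _ _ H2). simpl.
  destruct L; reflexivity.
Qed.

Lemma Zconv_zsum f L : Zconv f L -> zsum f = L.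
Proof. intro H. unfold zsum. apply clim_of. exact H. Qed.

Definition hz (f : Z -> C) (j : nat) : C :=
  match j with O => f 0%Z | S _ => (f (Z.of_nat j) + f (- Z.of_nat j)%Z)%C end.

Lemma symS_hz f N : symS f N = sum_n (hz f) N.
Proof.
  unfold symS. induction N.
  - simpl. rewrite !sum_O. reflexivity.
  - rewrite sum_Sn, <- IHN. unfold sum_n.
    replace (2 * S N)%nat with (S (S (2 * N))) by lia.
    rewrite sum_Sn_m by lia. rewrite <- sum_n_m_S. rewrite sum_n_Sm by lia.
    rewrite (sum_n_m_ext _ (fun k => f (Z.of_nat k - Z.of_nat N)%Z)).
    2:{ intro k. f_equal. lia. }
    change (hz f (S N)) with (f (Z.of_nat (S N)) + f (- Z.of_nat (S N))%Z)%C.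
    replace (Z.of_nat 0 - Z.of_nat (S N))%Z with (- Z.of_nat (S N))%Z by lia.
    replace (Z.of_nat (S (S (2 * N))) - Z.of_nat (S N))%Z with (Z.of_nat (S N)) by lia.
    change plus with Cplus.
    apply (fun a X b : C => (ltac:(ring) : (a + (X + b) = X + (b + a))%C)).
Qed.

Definition decay (f : Z -> C) :=
  exists (J : nat) (C0 r : R), 0 <= r < 1 /\
    forall j : nat, (J <= j)%nat ->
      Cmod (f (Z.of_nat j)) <= C0 * r ^ j /\ Cmod (f (- Z.of_nat j)%Z) <= C0 * r ^ j.

Lemma decay_conv f : decay f -> exists L, Zconv f L.
Proof.
  intros (J & C0 & r & Hr & Hb).
  assert (Hex : ex_series (V := C_NormedModule) (hz f)).
  { apply (ex_series_incr_n _ (S J)).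
    apply (ex_series_le (V := C_CompleteNormedModule) _ (fun k => (2 * C0 * r ^ (S J)) * r ^ k)).
    - intro k. change (Cmod (hz f (S J + k)) <= 2 * C0 * r ^ S J * r ^ k).
      replace (S J + k)%nat with (S (J + k)) by lia.
      change (hz f (S (J + k))) with (f (Z.of_nat (S (J+k))) + f (- Z.of_nat (S (J+k)))%Z)%C.
      destruct (Hb (S (J + k)) ltac:(lia)) as [H1 H2].
      eapply Rle_trans; [apply Cmod_triangle|].
      replace (2 * C0 * r ^ S J * r ^ k) with (C0 * r ^ S (J + k) + C0 * r ^ S (J + k)).
      + lra.
      + replace (S (J + k)) with (S J + k)%nat by lia. rewrite pow_add. ring.
    - apply (ex_series_scal_l (V := R_NormedModule)). apply ex_series_geom.
      rewrite Rabs_pos_eq; lra. }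
  destruct Hex as [L HL]. exists L. unfold Zconv.
  eapply filterlim_ext; [|exact HL]. intro N. symmetry. apply symS_hz.
Qed.

Lemma lim_plusC (a b : nat -> C) la lb :
  filterlim a eventually (locally la) -> filterlim b eventually (locally lb) ->
  filterlim (fun n => (a n + b n)%C) eventually (locally (la + lb)%C).
Proof.
  intros Ha Hb.
  apply (filterlim_comp_2 (G := locally la) (H := locally lb) a b (fun x y => plus (G := C_AbelianMonoid) x y)); auto.
  apply (filterlim_plus (V := C_NormedModule)).
Qed.

Lemma lim_bound0 (a : nat -> C) (J : nat) C0 r : 0 <= r < 1 ->
  (forall j, (J <= j)%nat -> Cmod (a j) <= C0 * r ^ j) ->
  filterlim a eventually (locally (RtoC 0)).
Proof.
  intros Hr Hb.
  assert (Hg : is_lim_seq (fun j => C0 * r ^ j) 0).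
  { replace 0 with (C0 * 0) by ring. apply (is_lim_seq_scal_l _ C0 0).
    apply is_lim_seq_geom. rewrite Rabs_pos_eq; lra. }
  apply (proj2 (filterlim_locally _ _)). intro eps.
  apply is_lim_seq_spec in Hg. destruct (Hg eps) as [N HN].
  exists (max N J). intros n Hn.
  apply (norm_compat1 (V := C_NormedModule)).
  change (Cmod (a n - RtoC 0)%C < eps).
  replace (a n - RtoC 0)%C with (a n) by ring.
  specialize (HN n ltac:(lia)). specialize (Hb n ltac:(lia)).
  rewrite Rminus_0_r in HN. apply Rabs_lt_between in HN. lra.
Qed.

Lemma Zconv_shift f L : decay f -> Zconv f L -> Zconv (fun n => f (n + 1)%Z) L.
Proof.
  intros Hd HL. destruct Hd as (J & C0 & r & Hr & Hb).
  assert (E : forall N, symS (fun n => f (n + 1)%Z) N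
                        = (symS f N + (f (Z.of_nat (S N)) + - f (- Z.of_nat N)%Z))%C).
  { intro N. unfold symS, sum_n.
    assert (E1 : sum_n_m (fun k => f (Z.of_nat k - Z.of_nat N)%Z) 0 (S (2 * N))
               = plus (sum_n_m (fun k => f (Z.of_nat k - Z.of_nat N)%Z) 0 (2 * N))
                      (f (Z.of_nat (S N)))).
    { rewrite sum_n_Sm by lia. f_equal. f_equal. lia. }
    assert (E2 : sum_n_m (fun k => f (Z.of_nat k - Z.of_nat N)%Z) 0 (S (2 * N))
               = plus (f (- Z.of_nat N)%Z)
                      (sum_n_m (fun k => f (Z.of_nat k - Z.of_nat N + 1)%Z) 0 (2 * N))).
    { rewrite sum_Sn_m by lia. rewrite <- sum_n_m_S.
      f_equal. apply sum_n_m_ext. intro k. f_equal. lia. }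
    rewrite E1 in E2. change plus with Cplus in E2.
    revert E2. apply (fun A X b c : C => (ltac:(intro HH; replace A with ((c + A) + - c)%C by ring; rewrite <- HH; ring) : (X + b = c + A -> A = X + (b + - c))%C)). }
  unfold Zconv. eapply filterlim_ext. { intro N. symmetry. apply E. }
  replace L with (L + RtoC 0)%C by ring.
  apply lim_plusC; [exact HL|].
  apply (lim_bound0 _ J (C0 * r + C0) r Hr).
  intros j Hj. eapply Rle_trans; [apply Cmod_triangle|].
  rewrite Cmod_opp.
  destruct (Hb (S j) ltac:(lia)) as [H1 _]. destruct (Hb j Hj) as [_ H2].
  simpl pow in H1. lra.
Qed.

Lemma Zconv_scal f L c : Zconv f L -> Zconv (fun m => (c * f m)%C) (c * L)%C.
Proof.
  intro H. unfold Zconv.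
  eapply filterlim_ext.
  { intro N. unfold symS. symmetry. apply (sum_n_mult_l (K := C_Ring)). }
  apply (filterlim_comp _ _ _ (symS f) (fun z => scal (V := C_NormedModule) c z) eventually (locally L) (locally (c * L)%C) H).
  apply (filterlim_scal_r (V := C_NormedModule)).
Qed.

Lemma zsum_scal f c : decay f -> zsum (fun m => (c * f m)%C) = (c * zsum f)%C.
Proof.
  intro Hd. destruct (decay_conv f Hd) as [L HL].
  rewrite (Zconv_zsum _ _ HL). apply Zconv_zsum. apply Zconv_scal, HL.
Qed.

Lemma zsum_shift f : decay f -> zsum (fun n => f (n + 1)%Z) = zsum f.
Proof.
  intro Hd. destruct (decay_conv f Hd) as [L HL].
  rewrite (Zconv_zsum _ _ HL). apply Zconv_zsum. apply Zconv_shift; auto.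
Qed.

Lemma exp_le x y : x <= y -> exp x <= exp y.
Proof. intros [H|H]; [left; apply exp_increasing; auto| subst; lra]. Qed.

Lemma exp_pow_INR c j : exp c ^ j = exp (c * INR j).
Proof.
  induction j; simpl. { rewrite Rmult_0_r, exp_0; reflexivity. }
  rewrite IHj, <- exp_plus. f_equal. destruct j; simpl; ring.
Qed.

Definition thT (u tau : C) (n : Z) : C :=
  (sgnZ n * cexp (PI * Ci * RtoC ((IZR n + /2) ^ 2) * tau
                  + 2 * PI * Ci * u * RtoC (IZR n + /2)))%C.

Lemma theta1_thT u tau : theta1 u tau = (- Ci * zsum (thT u tau))%C.
Proof. reflexivity. Qed.

Lemma Cmod_thT u tau n :
  Cmod (thT u tau n) = exp (- PI * Im tau * (IZR n + /2) ^ 2 - 2 * PI * Im u * (IZR n + /2)).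
Proof.
  unfold thT. rewrite Cmod_mult, Cmod_sgnZ, Cmod_cexp, Rmult_1_l. f_equal.
  unfold Re, Im; simpl. ring.
Qed.

Lemma theta_ineq t b x j : 0 < t -> 0 <= j ->
  (x = j + /2 \/ x = - j + /2) ->
  - PI * t * x ^ 2 - 2 * PI * b * x <= (PI * t + 2 * PI * (b / t) ^ 2 * t) + (- PI * t) * j.
Proof.
  intros Ht Hj Hx. set (q := b / t).
  assert (Hb : b = q * t) by (unfold q; field; lra).
  rewrite Hb.
  assert (Hin : 0 <= x ^ 2 + 2 * q * x - j + 1 + 2 * q ^ 2).
  { pose proof (pow2_ge_0 (x + 2 * q)). pose proof (pow2_ge_0 (j - /2)).
    pose proof (pow2_ge_0 (j - 3 * /2)).
    destruct Hx as [Hx|Hx]; rewrite Hx in *; nra. }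
  pose proof PI_RGT_0.
  assert (0 <= PI * t * (x ^ 2 + 2 * q * x - j + 1 + 2 * q ^ 2)) by (apply Rmult_le_pos; nra).
  nra.
Qed.

Lemma thT_decay u tau : 0 < Im tau -> decay (thT u tau).
Proof.
  intro Ht. set (t := Im tau) in *. set (b := Im u).
  exists 0%nat, (exp (PI * t + 2 * PI * (b / t) ^ 2 * t)), (exp (- PI * t)).
  split.
  { split; [left; apply exp_pos|]. rewrite <- exp_0. apply exp_increasing.
    pose proof PI_RGT_0. nra. }
  intros j _. rewrite exp_pow_INR, <- exp_plus, !Cmod_thT. fold t b.
  pose proof (pos_INR j).
  split; apply exp_le; apply theta_ineq; auto.
  - left. rewrite <- INR_IZR_INZ. reflexivity.
  - right. rewrite opp_IZR, <- INR_IZR_INZ. reflexivity.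
Qed.

Definition chT (n l : Z) (n' : R) (l' : Z) (u v tau : C) (m : Z) : C :=
  let a := aZ n l in let k := kZ l l' m in let kR := IZR k in
  (sgnZ k * e2pi (v * RtoC kR) * e2pi (u * RtoC (a * kR + n' + /2))
       * cexp (PI * Ci * tau * RtoC (kR * (kR * (2 * a + 1) + 2 * n' + 1)))
       / (1 - e2pi (u + RtoC kR * tau)))%C.

Lemma chiA_chT n l n' l' u v tau :
  chiA n l n' l' u v tau = (- Ci * theta1 u tau / (eta tau ^ 3) * zsum (chT n l n' l' u v tau))%C.
Proof. reflexivity. Qed.

Lemma Cmod_den_ge x : (1 <= x \/ x <= -1) ->
  forall w : C, Cmod w = exp (- 2 * PI * x) -> / 2 <= Cmod (1 - w)%C.
Proof.
  intros Hx w Hw. pose proof PI2_1. pose proof (exp_ineq1_le 1) as He1.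
  assert (E1 : Cmod ((1 - w) + w)%C <= Cmod (1 - w)%C + Cmod w) by apply Cmod_triangle.
  replace ((1 - w) + w)%C with (RtoC 1) in E1 by ring.
  assert (E2 : Cmod w <= Cmod (1 - w)%C + Cmod (RtoC 1)).
  { replace w with (- (1 - w) + 1)%C at 1 by ring.
    eapply Rle_trans; [apply Cmod_triangle|]. rewrite Cmod_opp. lra. }
  rewrite Cmod_1 in E1, E2.
  destruct Hx as [Hx|Hx].
  - assert (Cmod w <= exp (-1)) by (rewrite Hw; apply exp_le; nra).
    assert (exp (-1) * exp 1 = 1) by (rewrite <- exp_plus; replace (-1+1) with 0 by ring; apply exp_0).
    pose proof (exp_pos (-1)). nra.
  - assert (exp 1 <= Cmod w) by (rewrite Hw; apply exp_le; nra).
    lra.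
Qed.

Lemma chi_ineq T a x q j L M : 0 < T -> 0 <= a -> 0 <= L -> L <= j -> j - L <= Rabs x ->
  - T * (2 * a + 1) * x ^ 2 - q * T * x - M <= (T / 2 * (L + 1) + T / 2 * q ^ 2 - M) + (- T / 2) * j.
Proof.
  intros HT Ha HL Hj Hx.
  assert (Hx2 : (j - L) ^ 2 <= x ^ 2).
  { rewrite <- (pow2_abs x). apply pow_incr. lra. }
  assert (Hin : 0 <= (2 * a + 1) * x ^ 2 * 2 + q * x * 2 + (L + 1) + q ^ 2 - j).
  { pose proof (pow2_ge_0 (x + q)). pose proof (pow2_ge_0 (j - L - /2)).
    assert (0 <= a * x ^ 2) by (apply Rmult_le_pos; [lra| apply pow2_ge_0]). nra. }
  assert (0 <= T * ((2 * a + 1) * x ^ 2 * 2 + q * x * 2 + (L + 1) + q ^ 2 - j)) by (apply Rmult_le_pos; lra).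
  nra.
Qed.

Definition K0c (n l : Z) (n' : R) (u v tau : C) (L : R) :=
  let T := PI * Im tau in let a := aZ n l in
  let B := 2 * PI * Im v + 2 * PI * a * Im u + PI * Im tau * (2 * n' + 1) in
  let q := B / T in let M := 2 * PI * Im u * (n' + /2) in
  T / 2 * (L + 1) + T / 2 * q ^ 2 - M.

Lemma chT_bound n l n' l' u v tau m j L :
  0 < Im tau -> 0 <= aZ n l -> 0 <= L -> L <= INR j ->
  INR j - L <= Rabs (IZR (kZ l l' m)) ->
  (1 <= Im u + IZR (kZ l l' m) * Im tau \/ Im u + IZR (kZ l l' m) * Im tau <= -1) ->
  Cmod (chT n l n' l' u v tau m) <= (2 * exp (K0c n l n' u v tau L)) * exp (- (PI * Im tau) / 2) ^ j.
Proof.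
  unfold K0c. cbv zeta.
  set (a := aZ n l).
  set (B := 2 * PI * Im v + 2 * PI * a * Im u + PI * Im tau * (2 * n' + 1)).
  set (M := 2 * PI * Im u * (n' + /2)).
  set (T := PI * Im tau). set (q := B / T).
  intros Ht Ha HL HLj Hx Hd.
  assert (HT : 0 < T) by (unfold T; pose proof PI_RGT_0; nra).
  unfold chT. cbv zeta. fold a. set (x := IZR (kZ l l' m)) in *.
  assert (HD : / 2 <= Cmod (1 - e2pi (u + RtoC x * tau))%C).
  { apply (Cmod_den_ge (Im u + x * Im tau)); auto. unfold e2pi. rewrite Cmod_cexp. f_equal.
    unfold Re, Im; simpl; ring. }
  assert (HDnz : (1 - e2pi (u + RtoC x * tau))%C <> RtoC 0).
  { intro H. rewrite H, Cmod_0 in HD. lra. }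
  rewrite Cmod_div by exact HDnz.
  rewrite !Cmod_mult, Cmod_sgnZ. unfold e2pi in *. rewrite !Cmod_cexp, Rmult_1_l, <- !exp_plus.
  match goal with |- exp ?P / _ <= _ => assert (HP : P = - T * (2 * a + 1) * x ^ 2 - q * T * x - M) end.
  { unfold q, B, M, T. unfold Re, Im; simpl. field. unfold Im in Ht. pose proof PI_RGT_0. split; lra. }
  rewrite HP.
  set (E := exp (- T * (2 * a + 1) * x ^ 2 - q * T * x - M)).
  set (D := Cmod (1 - cexp (2 * PI * Ci * (u + RtoC x * tau)))%C) in *.
  assert (HE : E <= exp (T / 2 * (L + 1) + T / 2 * q ^ 2 - M) * exp (- T / 2) ^ j).
  { rewrite exp_pow_INR, <- exp_plus. apply exp_le. apply chi_ineq; auto. }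
  assert (HE0 : 0 < E) by apply exp_pos.
  assert (E / D <= 2 * E).
  { unfold Rdiv. rewrite Rmult_comm. apply Rmult_le_compat_r; [lra|].
    apply Rle_trans with (/ / 2); [apply Rinv_le_contravar; lra | rewrite Rinv_inv; lra]. }
  lra.
Qed.

Lemma chT_decay n l n' l' u v tau : (0 < l)%Z -> 0 <= aZ n l -> 0 < Im tau ->
  decay (chT n l n' l' u v tau).
Proof.
  intros Hl Ha Ht.
  set (L := Rabs (IZR l')). set (b := Im u). set (t := Im tau) in *.
  destruct (INR_archimed 1 (L + (Rabs b + 1) / t) ltac:(lra)) as [J HJ].
  rewrite Rmult_1_r in HJ.
  exists J, (2 * exp (K0c n l n' u v tau L)), (exp (- (PI * Im tau) / 2)).
  assert (HT : 0 < PI * t) by (pose proof PI_RGT_0; nra).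
  split.
  { split; [left; apply exp_pos|]. rewrite <- exp_0. apply exp_increasing. fold t. lra. }
  intros j Hj. apply le_INR in Hj.
  assert (Hli : 1 <= IZR l) by (apply IZR_le; lia).
  assert (HL0 : 0 <= L) by apply Rabs_pos.
  assert (Hq : 0 < (Rabs b + 1) / t) by (apply Rdiv_lt_0_compat; [pose proof (Rabs_pos b); lra| exact Ht]).
  assert (HjL : (INR j - L) * t >= Rabs b + 1).
  { assert (INR j - L > (Rabs b + 1) / t) by lra.
    replace (Rabs b + 1) with ((Rabs b + 1) / t * t) by (field; lra). nra. }
  assert (Hb1 : b <= Rabs b) by apply Rle_abs.
  assert (Hb2 : - b <= Rabs b) by (rewrite <- Rabs_Ropp; apply Rle_abs).
  assert (HL1 : IZR l' <= L) by apply Rle_abs.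
  assert (HL2 : - IZR l' <= L) by (unfold L; rewrite <- Rabs_Ropp; apply Rle_abs).
  pose proof (pos_INR j).
  assert (Hjl : INR j <= INR j * IZR l) by nra.
  clearbody L.
  split; apply chT_bound; auto; try lra.
  - unfold kZ. rewrite plus_IZR, mult_IZR, <- INR_IZR_INZ.
    eapply Rle_trans; [|apply Rle_abs]. nra.
  - unfold kZ. rewrite plus_IZR, mult_IZR, <- INR_IZR_INZ. left. fold b t. nra.
  - unfold kZ. rewrite plus_IZR, mult_IZR, opp_IZR, <- INR_IZR_INZ.
    rewrite <- Rabs_Ropp. eapply Rle_trans; [|apply Rle_abs]. nra.
  - unfold kZ. rewrite plus_IZR, mult_IZR, opp_IZR, <- INR_IZR_INZ. right. fold b t. nra.
Qed.

Definition EE (n l : Z) (n' : R) (l' : Z) (u v tau : C) (m : Z) : C :=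
  let a := aZ n l in let kR := IZR (kZ l l' m) in
  (2 * PI * Ci * (v * RtoC kR) + 2 * PI * Ci * (u * RtoC (a * kR + n' + /2))
   + PI * Ci * tau * RtoC (kR * (kR * (2 * a + 1) + 2 * n' + 1)))%C.

Lemma chT_nf n l n' l' u v tau m :
  chT n l n' l' u v tau m =
  (sgnZ (kZ l l' m) * cexp (EE n l n' l' u v tau m)
   / (1 - cexp (2 * PI * Ci * (u + RtoC (IZR (kZ l l' m)) * tau))))%C.
Proof.
  unfold chT, EE, e2pi. cbv zeta. rewrite !cexp_add. unfold Cdiv. ring.
Qed.

Lemma term_eq_gen (s1 s2 sg X W E1 E2 F1 F2 V : C) :
  s1 = (sg * s2)%C -> E1 = (X + W + E2)%C -> cexp W = RtoC 1 ->
  F1 = (F2 + V)%C -> cexp V = RtoC 1 ->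
  (s1 * cexp E1 / (1 - cexp F1) = (sg * cexp X) * (s2 * cexp E2 / (1 - cexp F2)))%C.
Proof.
  intros -> -> HW -> HV. rewrite !cexp_add, HW, HV, !Cmult_1_r. unfold Cdiv. ring.
Qed.

Lemma cexp_2piZ' (k : Z) : cexp (2 * PI * Ci * RtoC (IZR k))%C = RtoC 1.
Proof. apply cexp_2piZ. Qed.

Lemma cexp_0' : cexp (RtoC 0) = RtoC 1.
Proof. apply cexp_0. Qed.

Ltac Cring ::= apply Ceq; unfold Re, Im; simpl; field.

Lemma chT_v1 n l n' l' u v tau m :
  chT n l n' l' u (v + 1)%C tau m = chT n l n' l' u v tau m.
Proof.
  rewrite !chT_nf.
  match goal with |- ?L = ?R => transitivity ((RtoC 1 * cexp (RtoC 0)) * R)%C end.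
  2:{ rewrite cexp_0'. ring. }
  apply (term_eq_gen _ _ _ _ (2 * PI * Ci * RtoC (IZR (kZ l l' m)))%C _ _ _ _ (RtoC 0)).
  - ring.
  - unfold EE. Cring.
  - apply cexp_2piZ'.
  - Cring.
  - apply cexp_0'.
Qed.

Lemma kZ_succ l l' m : kZ l (l' + 1) m = (kZ l l' m + 1)%Z.
Proof. unfold kZ. ring. Qed.

Lemma chT_valpha n l n' l' u v tau alpha m :
  chT n l n' l' u (v + RtoC alpha * tau)%C tau m
  = (cexp (- (2 * PI * Ci * RtoC alpha * u)) * chT n l (n' + alpha) l' u v tau m)%C.
Proof.
  rewrite !chT_nf.
  match goal with |- _ = (?c * ?R)%C => transitivity ((RtoC 1 * c) * R)%C end.
  2:{ ring. }
  apply (term_eq_gen _ _ _ _ (RtoC 0) _ _ _ _ (RtoC 0)).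
  - ring.
  - unfold EE. Cring.
  - apply cexp_0'.
  - Cring.
  - apply cexp_0'.
Qed.

Lemma chT_vtau n l n' l' u v tau m :
  chT n l n' l' u (v + tau)%C tau m
  = (cexp (- (2 * PI * Ci * u)) * chT n l (n' + 1) l' u v tau m)%C.
Proof.
  rewrite !chT_nf.
  match goal with |- _ = (?c * ?R)%C => transitivity ((RtoC 1 * c) * R)%C end.
  2:{ ring. }
  apply (term_eq_gen _ _ _ _ (RtoC 0) _ _ _ _ (RtoC 0)).
  - ring.
  - unfold EE. Cring.
  - apply cexp_0'.
  - Cring.
  - apply cexp_0'.
Qed.

Lemma chT_u1 n l n' l' u v tau m :
  chT n l n' l' (u + 1)%C v tau m
  = (cexp (2 * PI * Ci * RtoC n' + PI * Ci) * chT n l n' l' u v tau m)%C.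
Proof.
  rewrite !chT_nf.
  match goal with |- _ = (?c * ?R)%C => transitivity ((RtoC 1 * c) * R)%C end.
  2:{ ring. }
  apply (term_eq_gen _ _ _ _ (2 * PI * Ci * RtoC (IZR (n / l * kZ l l' m)))%C _ _ _ _
           (2 * PI * Ci * RtoC (IZR 1))%C).
  - ring.
  - unfold EE, aZ. rewrite mult_IZR. apply Ceq; unfold Re, Im; simpl; field.
  - apply cexp_2piZ'.
  - Cring.
  - apply cexp_2piZ'.
Qed.

Lemma chT_utau n l n' l' u v tau m :
  chT n l n' l' (u + tau)%C v tau m
  = ((RtoC (-1) * cexp (- (2 * PI * Ci * v) + 2 * PI * Ci * u + PI * Ci * tau))
     * chT n l (n' - aZ n l - 1) (l' + 1) u v tau m)%C.
Proof.
  rewrite !chT_nf. unfold EE. rewrite !kZ_succ, !plus_IZR, sgnZ_succ.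
  apply (term_eq_gen _ _ _ _ (RtoC 0) _ _ _ _ (RtoC 0)).
  - Cring.
  - Cring.
  - apply cexp_0'.
  - Cring.
  - apply cexp_0'.
Qed.

Lemma thT_u1 u tau n : thT (u + 1)%C tau n = (RtoC (-1) * thT u tau n)%C.
Proof.
  unfold thT.
  match goal with |- (?s * cexp ?P1 = _ * (_ * cexp ?P2))%C =>
    replace P1 with (PI * Ci + 2 * PI * Ci * RtoC (IZR n) + P2)%C by Cring end.
  rewrite !cexp_add, cexp_pi, cexp_2piZ'. Cring.
Qed.

Lemma thT_utau u tau n :
  thT (u + tau)%C tau n
  = ((RtoC (-1) * cexp (- (PI * Ci * tau) - 2 * PI * Ci * u)) * thT u tau (n + 1))%C.
Proof.
  unfold thT. rewrite plus_IZR, sgnZ_succ.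
  match goal with |- (?s * cexp ?P1 = _ * cexp ?X * (_ * cexp ?P2))%C =>
    replace P1 with (X + P2)%C by Cring end.
  rewrite !cexp_add. Cring.
Qed.



Lemma aZ_nonneg n l : (0 < l)%Z -> (n mod l = 0)%Z -> (0 < n * l + l * l)%Z -> 0 <= aZ n l.
Proof.
  intros Hl Hm Hp. unfold aZ. apply IZR_le.
  assert (Hn : n = (l * (n / l))%Z) by (apply Z.div_exact; lia).
  set (d := (n / l)%Z) in *. rewrite Hn in Hp. nia.
Qed.

Lemma zsum_scal_shift f c : decay f -> zsum (fun n => (c * f (n + 1)%Z)%C) = (c * zsum f)%C.
Proof.
  intro Hd. destruct (decay_conv f Hd) as [L HL].
  rewrite (Zconv_zsum _ _ HL). apply Zconv_zsum.
  apply (Zconv_scal (fun n => f (n + 1)%Z)). apply Zconv_shift; auto.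
Qed.

Lemma Cm1 : RtoC (-1) = (- RtoC 1)%C.
Proof. apply Ceq; simpl; lra. Qed.

Theorem mainTheorem3 (n l : Z) (hl : (0 < l)%Z) (hdiv : (n mod l = 0)%Z)
    (hpos : (0 < n * l + l * l)%Z) (n' : R) (l' : Z) (u v tau : C)
    (htau : 0 < Im tau) :
  let a := aZ n l in
  let y := e2pi v in
  let z := e2pi u in
  (admissible l l' u tau -> admissible l l' (u + 1)%C tau ->
     chiA n l n' l' (u + 1)%C v tau
     = (e2pi (RtoC (a * IZR l' + n')) * chiA n l n' l' u v tau)%C) /\
  (admissible l l' (u + tau)%C tau -> admissible l (l' + 1)%Z u tau ->
     chiA n l n' l' (u + tau)%C v tau
     = (/ y * chiA n l (n' - a - 1) (l' + 1)%Z u v tau)%C) /\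
  (admissible l l' u tau ->
     chiA n l n' l' u (v + 1)%C tau = chiA n l n' l' u v tau) /\
  (admissible l l' u tau ->
     chiA n l n' l' u (v + tau)%C tau = (/ z * chiA n l (n' + 1) l' u v tau)%C) /\
  (forall alpha : R, admissible l l' u tau ->
     chiA n l n' l' u (v + RtoC alpha * tau)%C tau
     = (cexp (- (2 * PI * Ci * RtoC alpha * u)) * chiA n l (n' + alpha) l' u v tau)%C).
Proof.
  intros a y z. subst a y z.
  pose proof (aZ_nonneg n l hl hdiv hpos) as Ha.
  split; [|split; [|split; [|split]]].
  - intros _ _. rewrite !chiA_chT, !theta1_thT.
    assert (E1 : thT (u + 1)%C tau = fun k => (RtoC (-1) * thT u tau k)%C)
      by (apply functional_extensionality; intro; apply thT_u1).
    assert (E2 : chT n l n' l' (u + 1)%C v tau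
                 = fun m => (cexp (2 * PI * Ci * RtoC n' + PI * Ci) * chT n l n' l' u v tau m)%C)
      by (apply functional_extensionality; intro; apply chT_u1).
    rewrite E1, E2, zsum_scal, zsum_scal by (apply thT_decay || apply chT_decay; auto).
    assert (He : e2pi (RtoC (aZ n l * IZR l' + n'))
                 = (RtoC (-1) * cexp (2 * PI * Ci * RtoC n' + PI * Ci))%C).
    { unfold e2pi, aZ. rewrite <- mult_IZR.
      replace (2 * PI * Ci * RtoC (IZR (n / l * l') + n'))%C
        with (2 * PI * Ci * RtoC (IZR (n / l * l')) + (2 * PI * Ci * RtoC n'))%C by Cring.
      rewrite !cexp_add, cexp_2piZ', cexp_pi, Cm1. ring. }
    rewrite He, Cm1. unfold Cdiv. ring.
  - intros _ _. rewrite !chiA_chT, !theta1_thT.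
    assert (E1 : thT (u + tau)%C tau
                 = fun k => ((RtoC (-1) * cexp (- (PI * Ci * tau) - 2 * PI * Ci * u)) * thT u tau (k + 1))%C)
      by (apply functional_extensionality; intro; apply thT_utau).
    assert (E2 : chT n l n' l' (u + tau)%C v tau
                 = fun m => ((RtoC (-1) * cexp (- (2 * PI * Ci * v) + 2 * PI * Ci * u + PI * Ci * tau))
                            * chT n l (n' - aZ n l - 1) (l' + 1) u v tau m)%C)
      by (apply functional_extensionality; intro; apply chT_utau).
    rewrite E1, E2, zsum_scal_shift, zsum_scal by (apply thT_decay || apply chT_decay; auto).
    unfold e2pi. rewrite cexp_inv.
    assert (Hc : (cexp (- (PI * Ci * tau) - 2 * PI * Ci * u)
                  * cexp (- (2 * PI * Ci * v) + 2 * PI * Ci * u + PI * Ci * tau))%C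
                 = cexp (- (2 * PI * Ci * v))).
    { rewrite <- cexp_add. f_equal. ring. }
    rewrite <- Hc, Cm1. unfold Cdiv. ring.
  - intros _. rewrite !chiA_chT.
    assert (E : chT n l n' l' u (v + 1)%C tau = chT n l n' l' u v tau)
      by (apply functional_extensionality; intro; apply chT_v1).
    rewrite E. reflexivity.
  - intros _. rewrite !chiA_chT.
    assert (E : chT n l n' l' u (v + tau)%C tau
                = fun m => (cexp (- (2 * PI * Ci * u)) * chT n l (n' + 1) l' u v tau m)%C)
      by (apply functional_extensionality; intro; apply chT_vtau).
    rewrite E, zsum_scal by (apply chT_decay; auto).
    unfold e2pi. rewrite cexp_inv. unfold Cdiv. ring.
  - intros alpha _. rewrite !chiA_chT.
    assert (E : chT n l n' l' u (v + RtoC alpha * tau)%C tau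
                = fun m => (cexp (- (2 * PI * Ci * RtoC alpha * u)) * chT n l (n' + alpha) l' u v tau m)%C)
      by (apply functional_extensionality; intro; apply chT_valpha).
    rewrite E, zsum_scal by (apply chT_decay; auto).
    unfold Cdiv. ring.
Qed.
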